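(* If $f:\mathbb{R}^{N}\rightarrow [0,\infty ]$ and $\hat{f}=0$, then either $f=0$ or there are $x_{0}\in \mathbb{R}^{N}$ and $0<z\leq \infty$ such that $f(x_0)=z$ and $f(x)=0$ for all $x\neq x_{0}$.
   Context: Enclosing balls: for nonempty bounded $X\subset\mathbb{R}^N$, $\overline{B}_X$ is the unique closed ball of minimal diameter containing $X$; $\overline{B}_X:=\mathbb{R}^N$ if $X$ unbounded; $\overline{B}_\emptyset:=\{0\}$. For $f:\mathbb{R}^N\to[-\infty,\infty]$ and $\xi\in[-\infty,\infty]$, $\rho^+_f(\xi)\in[0,\infty]$ is the radius of $\overline{B}_{\{f>\xi\}}$, $\gamma^+_f(t):=\inf\{\xi:\rho^+_f(\xi)\le t\}$ for $t\in[0,\infty)$, and $\hat f(x):=\gamma^+_f(|x|)$. *)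

(* Defs.v *)
From HB Require Import structures.
From mathcomp Require Import all_boot all_order all_algebra.
From mathcomp Require Import all_classical all_reals ereal.
Set Implicit Arguments. Unset Strict Implicit. Unset Printing Implicit Defensive.
Import Order.TTheory GRing.Theory Num.Theory.
Local Open Scope ring_scope.
Local Open Scope classical_set_scope.

Definition enorm (R : realType) (N : nat) (x : 'rV[R]_N) : R :=
  Num.sqrt (\sum_(i < N) (x ord0 i) ^+ 2).

Definition cball (R : realType) (N : nat) (c : 'rV[R]_N) (r : R) : set 'rV[R]_N :=
  [set x | enorm (x - c) <= r].

(* For X unbounded no such ball exists and the radius is +oo (B_X = R^N);
   for X empty every ball works, radius 0 (B_empty = {0}). *)
Definition enc_radius (R : realType) (N : nat) (X : set 'rV[R]_N) : \bar R :=
  ereal_inf [set (r%:E)%E | r in [set r : R | 0 <= r /\ exists c, X `<=` cball c r]].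

Definition rho_plus (R : realType) (N : nat) (f : 'rV[R]_N -> \bar R) (xi : \bar R)
  : \bar R := enc_radius [set x | (xi < f x)%E].

Definition gamma_plus (R : realType) (N : nat) (f : 'rV[R]_N -> \bar R) (t : R)
  : \bar R := ereal_inf [set xi : \bar R | (rho_plus f xi <= t%:E)%E].

Definition fhat (R : realType) (N : nat) (f : 'rV[R]_N -> \bar R) (x : 'rV[R]_N)
  : \bar R := gamma_plus f (enorm x).

(* Main.v *)
Require Import Defs.
From mathcomp Require Import all_boot all_order all_algebra.
From mathcomp Require Import all_classical all_reals ereal.
Import Order.TTheory GRing.Theory Num.Theory.
Local Open Scope ring_scope.

Lemma coord_le (R : realType) (N : nat) (x : 'rV[R]_N) i :
  `|x ord0 i| <= enorm x.
Proof.
rewrite /enorm -sqrtr_sqr ler_sqrt ?sumr_ge0 // => [|j _]; last exact: sqr_ge0.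
rewrite (bigD1 i) //= lerDl sumr_ge0 // => j _; exact: sqr_ge0.
Qed.

Lemma atmost1 (R : realType) (N : nat) (X : set 'rV[R]_N) :
  (enc_radius X <= 0)%E -> forall x y, X x -> X y -> x = y.
Proof.
move=> H x y Xx Xy; apply/rowP => i; apply/eqP; apply: contraT => Hne.
have dpos : 0 < `|x ord0 i - y ord0 i| / 2.
  by rewrite divr_gt0 // normr_gt0 subr_eq0.
have : ((`|x ord0 i - y ord0 i| / 2)%:E <= enc_radius X)%E.
  apply/ereal_infP => _ [r [r0 [c Hc]] <-]; rewrite lee_fin.
  have h1 := @coord_le R N (x - c) i; have h2 := @coord_le R N (y - c) i.
  have := Hc x Xx; have := Hc y Xy; rewrite /cball /= => hy hx.
  rewrite !mxE in h1 h2.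
  rewrite ler_pdivrMr // mulr_natr mulr2n.
  have -> : x ord0 i - y ord0 i = (x ord0 i - c ord0 i) - (y ord0 i - c ord0 i)
    by rewrite opprB addrA subrK.
  apply: (le_trans (ler_normB _ _)); apply: lerD; apply: le_trans; eauto.
move=> h; have := le_trans h H; rewrite lee_fin leNgt dpos //.
Qed.

Theorem lemma12 (R : realType) (N : nat) (f : 'rV[R]_N -> \bar R)
  (f_ge0 : forall x, (0 <= f x)%E)
  (hat0 : forall x, fhat f x = 0%E) :
  (forall x, f x = 0%E) \/
  (exists (x0 : 'rV[R]_N) (z : \bar R),
      (0 < z)%E /\ f x0 = z /\ forall x, x != x0 -> f x = 0%E).
Proof.
have g0 : gamma_plus f 0 = 0%E.
  have := hat0 0; rewrite /fhat /enorm big1 ?sqrtr0 // => i _.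
  by rewrite mxE expr0n.
have key : forall x y, (0 < f x)%E -> (0 < f y)%E -> x = y.
  move=> x y hx hy.
  have : (gamma_plus f 0 < Order.min (f x) (f y))%E by rewrite g0 lt_min hx hy.
  move/ereal_inf_lt => [xi hxi]; rewrite lt_min => /andP[ax ay].
  move: hxi; rewrite /rho_plus => /atmost1; apply => //.
have [[x0 hx0]|nex] := pselect (exists x, (0 < f x)%E).
  right; exists x0, (f x0); split => //; split => // x hx.
  apply/eqP; rewrite eq_le f_ge0 andbT leNgt; apply/negP => h.
  by move/eqP: hx; apply; apply: key.
left => x; apply/eqP; rewrite eq_le f_ge0 andbT leNgt; apply/negP => h.
by apply: nex; exists x.
Qed.
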